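(* Let $\mathcal{D}[t]\subset\mathcal{H}\subset\mathcal{D}^\times[t^\times]$ be a rigged Hilbert space with $\mathcal{D}[t]$ complete and reflexive. A sequence $\{\zeta_n\}$ of elements of $\mathcal{D}^\times$ is Bessel-like if and only if, for every orthonormal basis $\{e_n\}$ of $\mathcal{H}$, there exists $W\in\mathcal{C}(\mathcal{H},\mathcal{D}^\times)$ such that $We_n=\zeta_n$ for every $n\in\mathbb{N}$ (here $W$ denotes its continuous extension to $\mathcal{H}$).
   Context: A rigged Hilbert space $\mathcal{D}[t]\subset\mathcal{H}\subset\mathcal{D}^\times[t^\times]$: $\mathcal{D}$ is a dense subspace of the Hilbert space $\mathcal{H}$ with a locally convex topology $t$ finer than the norm topology, $\mathcal{D}^\times$ is the space of continuous conjugate-linear functionals on $\mathcal{D}[t]$ with the strong dual topology $t^\times=\beta(\mathcal{D}^\times,\mathcal{D})$, $\mathcal{H}\subset\mathcal{D}^\times$, and the duality form $\langle\Phi,\eta\rangle$ (value of $\Phi\in\mathcal{D}^\times$ at $\eta\in\mathcal{D}$) extends the inner product. $\mathcal{L}(\mathcal{D},\mathcal{D}^\times)$ denotes the continuous linear maps from $\mathcal{D}[t]$ into $\mathcal{D}^\times[t^\times]$. For $\mathcal{E},\mathcal{F}\in\{\mathcal{D},\mathcal{H},\mathcal{D}^\times\}$ (with their respective topologies $t$, norm, $t^\times$), $\mathcal{C}(\mathcal{E},\mathcal{F})$ is the set of $X\in\mathcal{L}(\mathcal{D},\mathcal{D}^\times)$ for which there exists a continuous linear map $Y:\mathcal{E}\to\mathcal{F}$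 with $Y\xi=X\xi$ for all $\xi\in\mathcal{D}$; $X$ is identified with $Y$. A sequence $\{\zeta_n\}\subset\mathcal{D}^\times$ is Bessel-like if for every bounded subset $\mathcal{M}$ of $\mathcal{D}[t]$, $\sup_{\eta\in\mathcal{M}}\sum_{k=1}^\infty|\langle\zeta_k,\eta\rangle|^2<\infty$. *)

(* Defs.v *)
From Stdlib Require Import Reals List.
From Coquelicot Require Import Coquelicot.
Open Scope R_scope.

Section RHS.
Variable V : ModuleSpace C_Ring.
(* ip : the inner product of H (linear in the first, conjugate-linear in
   the second argument). *)
Variable ip : V -> V -> C.

Definition is_inner_product : Prop :=
  (forall x y z, ip (plus x y) z = Cplus (ip x z) (ip y z)) /\
  (forall (a : C) x z, ip (scal a x) z = Cmult a (ip x z)) /\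
  (forall x y, ip y x = Cconj (ip x y)) /\
  (forall x, 0 <= Re (ip x x)) /\
  (forall x, ip x x = RtoC 0 -> x = zero).

Definition hnorm (x : V) : R := sqrt (Re (ip x x)).

Definition is_hilbert : Prop :=
  is_inner_product /\
  forall u : nat -> V,
    (forall eps, 0 < eps -> exists N, forall m n, (N <= m)%nat -> (N <= n)%nat ->
        hnorm (minus (u m) (u n)) < eps) ->
    exists l, forall eps, 0 < eps -> exists N, forall n, (N <= n)%nat ->
        hnorm (minus (u n) l) < eps.

Definition is_ONB (e : nat -> V) : Prop :=
  (forall m n, ip (e m) (e n) = if Nat.eqb m n then RtoC 1 else RtoC 0) /\
  (forall x, (forall n, ip x (e n) = RtoC 0) -> x = zero).

(* The dense subspace D (a predicate on V) and a locally convex topology t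
   on D, given by a family of seminorms p : I -> V -> R (only their values
   on D matter). *)
Variable Dp : V -> Prop.
Variable I : Type.
Variable p : I -> V -> R.

Fixpoint sum_sn (F : list I) (x : V) : R :=
  match F with nil => 0 | cons i F' => p i x + sum_sn F' x end.

Definition is_dense_subspace : Prop :=
  Dp zero /\ (forall x y, Dp x -> Dp y -> Dp (plus x y)) /\
  (forall (a : C) x, Dp x -> Dp (scal a x)) /\
  (forall x eps, 0 < eps -> exists d, Dp d /\ hnorm (minus x d) < eps).

Definition is_seminorm_family : Prop :=
  forall i, (forall x, Dp x -> 0 <= p i x) /\
            (forall x y, Dp x -> Dp y -> p i (plus x y) <= p i x + p i y) /\
            (forall (a : C) x, Dp x -> p i (scal a x) = Cmod a * p i x).

Definition t_finer_than_norm : Prop :=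
  exists (F : list I) (c : R), forall x, Dp x -> hnorm x <= c * sum_sn F x.

Definition is_rigged : Prop :=
  is_hilbert /\ is_dense_subspace /\ is_seminorm_family /\ t_finer_than_norm.

Definition t_bounded (M : V -> Prop) : Prop :=
  (forall x, M x -> Dp x) /\
  forall i, exists b, forall x, M x -> p i x <= b.

(* D^× : continuous conjugate-linear functionals on D[t]; an element is a
   function V -> C of which only the restriction to D matters;
   ⟨Φ, η⟩ = Φ η. *)
Definition in_Dx (Phi : V -> C) : Prop :=
  (forall x y, Dp x -> Dp y -> Phi (plus x y) = Cplus (Phi x) (Phi y)) /\
  (forall (a : C) x, Dp x -> Phi (scal a x) = Cmult (Cconj a) (Phi x)) /\
  exists (F : list I) (c : R), forall x, Dp x -> Cmod (Phi x) <= c * sum_sn F x.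

(* bounded subsets of D^×[t^×] (strong dual topology: uniform convergence
   on bounded subsets of D[t]) *)
Definition strong_bounded (B : (V -> C) -> Prop) : Prop :=
  (forall Phi, B Phi -> in_Dx Phi) /\
  forall M, t_bounded M -> exists b, forall Phi x, B Phi -> M x -> Cmod (Phi x) <= b.

(* continuous linear functionals on D^×[t^×] (elements of the strong bidual) *)
Definition in_Dxx (Psi : (V -> C) -> C) : Prop :=
  (forall Phi Chi, in_Dx Phi -> in_Dx Chi ->
     Psi (fun x => Cplus (Phi x) (Chi x)) = Cplus (Psi Phi) (Psi Chi)) /\
  (forall (a : C) Phi, in_Dx Phi -> Psi (fun x => Cmult a (Phi x)) = Cmult a (Psi Phi)) /\
  (forall Phi Chi, in_Dx Phi -> in_Dx Chi -> (forall x, Dp x -> Phi x = Chi x) ->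
     Psi Phi = Psi Chi) /\
  exists M c, t_bounded M /\ forall Phi r, in_Dx Phi -> 0 <= r ->
     (forall x, M x -> Cmod (Phi x) <= r) -> Cmod (Psi Phi) <= c * r.

(* D[t] is reflexive: the canonical map J : D -> D^××, (J η)(Φ) = ⟨Φ,η⟩,
   is a bijection onto D^×× and a homeomorphism from D[t] onto D^××
   with its strong topology β(D^××, D^×). *)
Definition reflexive : Prop :=
  (* injective *)
  (forall x, Dp x -> (forall Phi, in_Dx Phi -> Phi x = RtoC 0) -> x = zero) /\
  (* onto *)
  (forall Psi, in_Dxx Psi -> exists x, Dp x /\ forall Phi, in_Dx Phi -> Psi Phi = Phi x) /\
  (* J continuous *)
  (forall B, strong_bounded B -> exists (F : list I) (c : R),
      forall Phi x, B Phi -> Dp x -> Cmod (Phi x) <= c * sum_sn F x) /\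
  (* J^{-1} continuous *)
  (forall i, exists B c, strong_bounded B /\ forall x r, Dp x -> 0 <= r ->
      (forall Phi, B Phi -> Cmod (Phi x) <= r) -> p i x <= c * r).

Definition t_complete : Prop :=
  forall (J : Type) (le : J -> J -> Prop) (u : J -> V),
    (forall j, le j j) -> (forall j k l, le j k -> le k l -> le j l) ->
    (exists j : J, True) -> (forall j k, exists l, le j l /\ le k l) ->
    (forall j, Dp (u j)) ->
    (forall i eps, 0 < eps -> exists j0, forall j k, le j0 j -> le j0 k ->
        p i (minus (u j) (u k)) < eps) ->
    exists y, Dp y /\ forall i eps, 0 < eps -> exists j0, forall j, le j0 j ->
        p i (minus (u j) y) < eps.

Definition bessel_like (zeta : nat -> V -> C) : Prop :=
  forall M, t_bounded M -> exists b, forall x N, M x ->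
    sum_n (fun k => Cmod (zeta k x) ^ 2) N <= b.

(* W ∈ C(H, D^×), identified with its continuous extension H -> D^×:
   a linear map H -> D^× continuous from the norm topology to t^×. *)
Definition in_C_H_Dx (W : V -> V -> C) : Prop :=
  (forall x, in_Dx (W x)) /\
  (forall x y z, Dp z -> W (plus x y) z = Cplus (W x z) (W y z)) /\
  (forall (a : C) x z, Dp z -> W (scal a x) z = Cmult a (W x z)) /\
  (forall M, t_bounded M -> exists c, forall x z, M z -> Cmod (W x z) <= c * hnorm x).

End RHS.

(* Main.v *)
Require Import Defs.
From Stdlib Require Import Reals Lra Lia List.
From Coquelicot Require Import Coquelicot.
Open Scope R_scope.

Lemma sumC_S (f : nat -> C) n : sum_n f (S n) = Cplus (sum_n f n) (f (S n)).
Proof. rewrite sum_Sn. reflexivity. Qed.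

Lemma sumR_S (f : nat -> R) n : sum_n f (S n) = sum_n f n + f (S n).
Proof. rewrite sum_Sn. reflexivity. Qed.

Section IP.
Context (V : ModuleSpace C_Ring) (ip : V -> V -> C) (HIP : is_inner_product V ip).

Lemma ip_plus_l x y z : ip (plus x y) z = Cplus (ip x z) (ip y z).
Proof. apply HIP. Qed.
Lemma ip_scal_l a x z : ip (scal a x) z = Cmult a (ip x z).
Proof. apply HIP. Qed.
Lemma ip_conj x y : ip y x = Cconj (ip x y).
Proof. apply HIP. Qed.
Lemma ip_plus_r x y z : ip x (plus y z) = Cplus (ip x y) (ip x z).
Proof. rewrite (ip_conj (plus y z) x), ip_plus_l, Cplus_conj, <- (ip_conj y x), <- (ip_conj z x). reflexivity. Qed.
Lemma ip_scal_r a x y : ip x (scal a y) = Cmult (Cconj a) (ip x y).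
Proof. rewrite (ip_conj (scal a y) x), ip_scal_l, Cmult_conj, <- (ip_conj y x). reflexivity. Qed.
Lemma ip_sum_l (u : nat -> V) w N :
  ip (sum_n u N) w = sum_n (fun k => ip (u k) w) N.
Proof.
  induction N. - rewrite !sum_O. reflexivity.
  - rewrite sum_Sn, sumC_S, ip_plus_l, IHN. reflexivity.
Qed.
Lemma Cconj_sum (f : nat -> C) N : Cconj (sum_n f N) = sum_n (fun k => Cconj (f k)) N.
Proof.
  induction N. - rewrite !sum_O. reflexivity.
  - rewrite !sumC_S, Cplus_conj, IHN. reflexivity.
Qed.
Lemma ip_sum_r (u : nat -> V) w N :
  ip w (sum_n u N) = sum_n (fun k => ip w (u k)) N.
Proof.
  rewrite (ip_conj (sum_n u N) w), ip_sum_l, Cconj_sum. apply sum_n_ext. intros; rewrite <- ip_conj; reflexivity.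
Qed.
End IP.
Lemma delta_sum (c : C) j N :
  sum_n (fun k => if Nat.eqb k j then c else RtoC 0) N = if Nat.leb j N then c else RtoC 0.
Proof.
  induction N.
  - rewrite sum_O. destruct j; reflexivity.
  - rewrite sumC_S, IHN.
    destruct (Nat.eqb (S N) j) eqn:E1.
    + apply Nat.eqb_eq in E1. subst j.
      replace (Nat.leb (S N) N) with false by (symmetry; apply Nat.leb_gt; lia).
      replace (Nat.leb (S N) (S N)) with true by (symmetry; apply Nat.leb_le; lia).
      apply injective_projections; simpl; ring.
    + apply Nat.eqb_neq in E1.
      destruct (Nat.leb j N) eqn:E2.
      * apply Nat.leb_le in E2. replace (Nat.leb j (S N)) with true by (symmetry; apply Nat.leb_le; lia).
        apply injective_projections; simpl; ring.
      * apply Nat.leb_gt in E2. replace (Nat.leb j (S N)) with false by (symmetry; apply Nat.leb_gt; lia).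
        apply injective_projections; simpl; ring.
Qed.

Lemma sum_RtoC (f : nat -> R) N : sum_n (fun k => RtoC (f k)) N = RtoC (sum_n f N).
Proof.
  induction N. - rewrite !sum_O. reflexivity.
  - rewrite sumC_S, sumR_S, IHN. apply injective_projections; simpl; ring.
Qed.

Lemma Cmod2 (c : C) : Cmult c (Cconj c) = RtoC (Cmod c ^ 2).
Proof. symmetry. apply Cmod2_conj. Qed.

Section ONB.
Context (V : ModuleSpace C_Ring) (ip : V -> V -> C) (HIP : is_inner_product V ip)
  (e : nat -> V)
  (Horth : forall m n, ip (e m) (e n) = if Nat.eqb m n then RtoC 1 else RtoC 0).

Definition comb (c : nat -> C) N : V := sum_n (fun k => scal (c k) (e k)) N.

Lemma ip_comb_e c N j : (j <= N)%nat -> ip (comb c N) (e j) = c j.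
Proof.
  intros Hj. unfold comb. rewrite ip_sum_l by exact HIP.
  rewrite (sum_n_ext _ (fun k => if Nat.eqb k j then c j else RtoC 0)).
  - rewrite delta_sum. replace (Nat.leb j N) with true by (symmetry; apply Nat.leb_le; lia). reflexivity.
  - intros k. rewrite ip_scal_l by exact HIP. rewrite Horth.
    destruct (Nat.eqb k j) eqn:E.
    + apply Nat.eqb_eq in E; subst. apply injective_projections; simpl; ring.
    + apply injective_projections; simpl; ring.
Qed.

Lemma ip_comb_x c N x : ip (comb c N) x = sum_n (fun k => Cmult (c k) (ip (e k) x)) N.
Proof.
  unfold comb. rewrite ip_sum_l by exact HIP. apply sum_n_ext. intros k.
  apply ip_scal_l; exact HIP.
Qed.

Lemma ip_x_comb c N x : ip x (comb c N) = sum_n (fun k => Cmult (Cconj (c k)) (ip x (e k))) N.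
Proof.
  unfold comb. rewrite ip_sum_r by exact HIP. apply sum_n_ext. intros k.
  apply ip_scal_r; exact HIP.
Qed.

Lemma ip_comb_comb c N : ip (comb c N) (comb c N) = RtoC (sum_n (fun k => Cmod (c k) ^ 2) N).
Proof.
  rewrite ip_comb_x, <- sum_RtoC. apply sum_n_ext_loc. intros k Hk.
  rewrite (ip_conj V ip HIP), ip_comb_e by exact Hk. apply Cmod2.
Qed.

Lemma bessel x N : sum_n (fun k => Cmod (ip x (e k)) ^ 2) N <= Re (ip x x).
Proof.
  set (a := fun k => ip x (e k)).
  set (s := comb a N).
  assert (H1 : ip x s = RtoC (sum_n (fun k => Cmod (a k) ^ 2) N)).
  { unfold s. rewrite ip_x_comb, <- sum_RtoC. apply sum_n_ext. intros k.
    unfold a at 2. rewrite Cmult_comm, <- Cmod2_conj. reflexivity. }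
  assert (H2 : ip s x = RtoC (sum_n (fun k => Cmod (a k) ^ 2) N)).
  { rewrite (ip_conj V ip HIP), H1. unfold Cconj, RtoC. simpl. f_equal. ring. }
  assert (H3 : ip s s = RtoC (sum_n (fun k => Cmod (a k) ^ 2) N)).
  { unfold s. apply ip_comb_comb. }
  destruct HIP as (_ & _ & _ & Hpos & _).
  specialize (Hpos (minus x s)).
  unfold minus in Hpos. rewrite <- scal_opp_one in Hpos.
  rewrite (ip_plus_l V ip HIP), !(ip_plus_r V ip HIP), !(ip_scal_l V ip HIP), !(ip_scal_r V ip HIP) in Hpos.
  rewrite H1, H2, H3 in Hpos.
  set (S := sum_n (fun k => Cmod (a k) ^ 2) N) in *. unfold a in S. fold S. simpl in Hpos. unfold Re. lra.
Qed.
End ONB.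

Lemma Cval (a : nat -> C) l : is_series a l ->
  iota (fun l' : C_CompleteNormedModule => @is_series C_AbsRing C_NormedModule a l') = l.
Proof.
  intros H. apply (iota_filterlim_locally (sum_n a) l). exact H.
Qed.

Lemma lim_bound (a : nat -> C) l B : @is_series C_AbsRing C_NormedModule a l ->
  (forall N, Cmod (sum_n a N) <= B) -> Cmod l <= B.
Proof.
  intros H HB.
  assert (H1 : filterlim (fun N => norm (sum_n a N)) eventually (locally (norm l))).
  { eapply filterlim_comp. exact H. apply filterlim_norm. }
  assert (H2 := filterlim_le (F := eventually) (fun N => norm (sum_n a N)) (fun _ => B) (norm l) B).
  simpl in H2. apply H2.
  - exists 0%nat. intros N _. apply HB.
  - exact H1.
  - apply filterlim_const.
Qed.

Lemma Cmod_sum (a : nat -> C) N : Cmod (sum_n a N) <= sum_n (fun k => Cmod (a k)) N.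
Proof. apply (norm_sum_n_m (K := C_AbsRing) (V := C_NormedModule) a 0 N). Qed.

Lemma amgm u v s : 0 < s -> 2 * u * v <= u ^ 2 / s + s * v ^ 2.
Proof.
  intros Hs.
  assert (H : 0 <= (u - s * v) ^ 2 / s).
  { apply Rdiv_le_0_compat; [apply pow2_ge_0 | lra]. }
  replace ((u - s * v) ^ 2 / s) with (u ^ 2 / s - 2 * u * v + s * v ^ 2) in H by (field; lra).
  lra.
Qed.

Lemma amgm_sum (u v : nat -> R) s N : 0 < s ->
  2 * sum_n (fun k => u k * v k) N <= sum_n (fun k => u k ^ 2) N / s + s * sum_n (fun k => v k ^ 2) N.
Proof.
  intros Hs. induction N.
  - rewrite !sum_O. pose proof (amgm (u 0%nat) (v 0%nat) s Hs). lra.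
  - rewrite !sumR_S. pose proof (amgm (u (S N)) (v (S N)) s Hs).
    unfold Rdiv in *. lra.
Qed.

Lemma sum_nonneg (f : nat -> R) N : (forall k, 0 <= f k) -> 0 <= sum_n f N.
Proof.
  intros H. induction N. - rewrite sum_O. apply H. - rewrite sumR_S. pose proof (H (S N)). lra.
Qed.

Lemma sum_sn_app (V : ModuleSpace C_Ring) I p F1 F2 (z : V) : sum_sn V I p (F1 ++ F2) z = sum_sn V I p F1 z + sum_sn V I p F2 z.
Proof. induction F1; simpl. - lra. - rewrite IHF1. lra. Qed.

Lemma sum_sn_nonneg (V : ModuleSpace C_Ring) Dp I p F (z : V) : is_seminorm_family V Dp I p -> Dp z -> 0 <= sum_sn V I p F z.
Proof.
  intros Hs Hz. induction F; simpl. - lra. - pose proof (proj1 (Hs a) z Hz). lra.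
Qed.

Lemma in_Dx_add (V : ModuleSpace C_Ring) Dp I p (Phi Chi : V -> C) : is_seminorm_family V Dp I p ->
  in_Dx V Dp I p Phi -> in_Dx V Dp I p Chi -> in_Dx V Dp I p (fun z => Cplus (Phi z) (Chi z)).
Proof.
  intros Hs (H1 & H2 & F1 & c1 & H3) (K1 & K2 & F2 & c2 & K3).
  split; [|split].
  - intros x y Hx Hy. rewrite H1, K1 by assumption. ring.
  - intros a x Hx. rewrite H2, K2 by assumption. ring.
  - exists (F1 ++ F2), (Rabs c1 + Rabs c2). intros x Hx.
    rewrite sum_sn_app.
    pose proof (sum_sn_nonneg V Dp I p F1 x Hs Hx). pose proof (sum_sn_nonneg V Dp I p F2 x Hs Hx).
    pose proof (H3 x Hx). pose proof (K3 x Hx).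
    pose proof (Cmod_triangle (Phi x) (Chi x)).
    pose proof (Rle_abs c1). pose proof (Rle_abs c2). pose proof (Rabs_pos c1). pose proof (Rabs_pos c2).
    nra.
Qed.

Lemma in_Dx_scal (V : ModuleSpace C_Ring) Dp I p (Phi : V -> C) (c : C) :
  in_Dx V Dp I p Phi -> in_Dx V Dp I p (fun z => Cmult c (Phi z)).
Proof.
  intros (H1 & H2 & F1 & c1 & H3).
  split; [|split].
  - intros x y Hx Hy. rewrite H1 by assumption. ring.
  - intros a x Hx. rewrite H2 by assumption. ring.
  - exists F1, (Cmod c * c1). intros x Hx. rewrite Cmod_mult.
    pose proof (H3 x Hx). pose proof (Cmod_ge_0 c). rewrite Rmult_assoc. apply Rmult_le_compat_l; auto.
Qed.

Section Fwd.
Context (V : ModuleSpace C_Ring) (ip : V -> V -> C) (Dp : V -> Prop) (I : Type) (p : I -> V -> R)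
  (HIP : is_inner_product V ip) (Hsn : is_seminorm_family V Dp I p)
  (e : nat -> V)
  (Horth : forall m n, ip (e m) (e n) = if Nat.eqb m n then RtoC 1 else RtoC 0)
  (zeta : nat -> V -> C) (Hz : forall n, in_Dx V Dp I p (zeta n))
  (Hb : bessel_like V Dp I p zeta).

Definition tm x z k : C := Cmult (ip x (e k)) (zeta k z).
Definition Wf x z : C :=
  iota (fun l' : C_CompleteNormedModule => @is_series C_AbsRing C_NormedModule (tm x z) l').

Lemma Re_ip_nonneg x : 0 <= Re (ip x x).
Proof. apply HIP. Qed.

Lemma tm_abs_bound x z b s N : 0 < s ->
  (forall N, sum_n (fun k => Cmod (zeta k z) ^ 2) N <= b) ->
  2 * sum_n (fun k => Cmod (tm x z k)) N <= Re (ip x x) / s + s * b.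
Proof.
  intros Hs HbN.
  rewrite (sum_n_ext _ (fun k => Cmod (ip x (e k)) * Cmod (zeta k z))).
  2:{ intros k. unfold tm. apply Cmod_mult. }
  pose proof (amgm_sum (fun k => Cmod (ip x (e k))) (fun k => Cmod (zeta k z)) s N Hs).
  pose proof (bessel V ip HIP e Horth x N). pose proof (HbN N).
  assert (s * sum_n (fun k => Cmod (zeta k z) ^ 2) N <= s * b) by (apply Rmult_le_compat_l; lra).
  assert (sum_n (fun k : nat => Cmod (ip x (e k)) ^ 2) N / s <= Re (ip x x) / s).
  { unfold Rdiv. apply Rmult_le_compat_r. left; apply Rinv_0_lt_compat; lra. lra. }
  lra.
Qed.

Lemma bz z : Dp z -> exists b, forall N, sum_n (fun k => Cmod (zeta k z) ^ 2) N <= b.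
Proof.
  intros Hz0. destruct (Hb (fun y => y = z)) as [b Hb'].
  - split. + intros y ->. exact Hz0. + intros i. exists (p i z). intros y ->. lra.
  - exists b. intros N. apply (Hb' z N). reflexivity.
Qed.

Lemma tm_ex x z : Dp z -> ex_series (fun k => Cmod (tm x z k)).
Proof.
  intros Hz0. destruct (bz z Hz0) as [b Hb'].
  destruct (ex_finite_lim_seq_incr (sum_n (fun k => Cmod (tm x z k))) ((Re (ip x x) / 1 + 1 * b) / 2)) as [l Hl].
  - intros n. rewrite sumR_S. pose proof (Cmod_ge_0 (tm x z (S n))). lra.
  - intros n. pose proof (tm_abs_bound x z b 1 n Rlt_0_1 Hb'). lra.
  - exists l. exact Hl.
Qed.

Lemma W_series x z : Dp z -> @is_series C_AbsRing C_NormedModule (tm x z) (Wf x z).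
Proof.
  intros Hz0.
  destruct (ex_series_le (K := C_AbsRing) (V := C_CompleteNormedModule) (tm x z) (fun k => Cmod (tm x z k))) as [l Hl].
  - intros n. apply Rle_refl.
  - apply tm_ex; exact Hz0.
  - unfold Wf. rewrite (Cval _ l Hl). exact Hl.
Qed.

Lemma W_val x z l : @is_series C_AbsRing C_NormedModule (tm x z) l -> Wf x z = l.
Proof. intros H. unfold Wf. apply Cval. exact H. Qed.

Lemma W_plus x y z : Dp z -> Wf (plus x y) z = Cplus (Wf x z) (Wf y z).
Proof.
  intros Hz0. apply W_val.
  apply (is_series_ext (fun k => plus (tm x z k) (tm y z k))).
  - intros k. change (Cplus (tm x z k) (tm y z k) = tm (plus x y) z k). unfold tm. rewrite (ip_plus_l V ip HIP). ring.
  - apply (is_series_plus (K := C_AbsRing) (V := C_NormedModule)); apply W_series; exact Hz0.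
Qed.

Lemma W_scal a x z : Dp z -> Wf (scal a x) z = Cmult a (Wf x z).
Proof.
  intros Hz0. apply W_val.
  apply (is_series_ext (fun k => scal a (tm x z k))).
  - intros k. change (Cmult a (tm x z k) = tm (scal a x) z k). unfold tm. rewrite (ip_scal_l V ip HIP). ring.
  - apply (is_series_scal (K := C_AbsRing) (V := C_NormedModule)). apply W_series; exact Hz0.
Qed.

Lemma W_e n z : Wf (e n) z = zeta n z.
Proof.
  apply W_val. unfold is_series.
  apply (filterlim_ext_loc (fun _ => zeta n z)).
  - exists n. intros N HN.
    rewrite (sum_n_ext _ (fun k => if Nat.eqb k n then zeta n z else RtoC 0)).
    + rewrite delta_sum. replace (Nat.leb n N) with true by (symmetry; apply Nat.leb_le; lia). reflexivity.
    + intros k. unfold tm. rewrite Horth. destruct (Nat.eqb n k) eqn:E.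
      * apply Nat.eqb_eq in E. subst. rewrite Nat.eqb_refl. apply injective_projections; simpl; ring.
      * rewrite Nat.eqb_sym, E. apply injective_projections; simpl; ring.
  - apply filterlim_const.
Qed.


Lemma W_bound M : t_bounded V Dp I p M ->
  exists c, forall x z, M z -> Cmod (Wf x z) <= c * hnorm V ip x.
Proof.
  intros HM. destruct (Hb M HM) as [bM HbM].
  set (c := (1 + Rabs bM) / 2).
  assert (Hc : 0 < c) by (unfold c; pose proof (Rabs_pos bM); lra).
  exists c. intros x z Mz.
  assert (Dz : Dp z) by (apply (proj1 HM); exact Mz).
  set (h := hnorm V ip x).
  assert (Hh : 0 <= h) by apply sqrt_pos.
  assert (Hhh : h * h = Re (ip x x)) by (apply sqrt_sqrt; apply Re_ip_nonneg).
  apply Rle_plus_epsilon. intros eps Heps.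
  set (s := h + eps / c).
  assert (Hs : 0 < s) by (unfold s; assert (0 < eps / c) by (apply Rdiv_lt_0_compat; lra); lra).
  assert (Hcs : c * s = c * h + eps) by (unfold s; field; lra).
  rewrite <- Hcs.
  apply (lim_bound (tm x z)). - apply W_series; exact Dz.
  - intros N. eapply Rle_trans. apply Cmod_sum.
    assert (HbN : forall N, sum_n (fun k => Cmod (zeta k z) ^ 2) N <= Rabs bM).
    { intros N'. eapply Rle_trans. apply (HbM z N' Mz). apply Rle_abs. }
    pose proof (tm_abs_bound x z (Rabs bM) s N Hs HbN).
    assert (Re (ip x x) / s <= s).
    { apply Rmult_le_reg_r with s; [lra|]. unfold Rdiv. rewrite Rmult_assoc, Rinv_l by lra.
      assert (h <= s) by (unfold s; assert (0 < eps / c) by (apply Rdiv_lt_0_compat; lra); lra).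
      nra. }
    unfold c. pose proof (Rabs_pos bM). nra.
Qed.

Lemma in_Dx_ext (f g : V -> C) : (forall z, f z = g z) -> in_Dx V Dp I p f -> in_Dx V Dp I p g.
Proof.
  intros E (H1 & H2 & F & c & H3). split; [|split].
  - intros u w Hu Hw. rewrite <- !E. apply H1; assumption.
  - intros a u Hu. rewrite <- !E. apply H2; assumption.
  - exists F, c. intros u Hu. rewrite <- E. apply H3; assumption.
Qed.

Lemma partial_in_Dx x N : in_Dx V Dp I p (fun z => sum_n (fun k => tm x z k) N).
Proof.
  induction N.
  - apply (in_Dx_ext (fun z => Cmult (ip x (e 0%nat)) (zeta 0%nat z))).
    + intros z. rewrite sum_O. reflexivity.
    + apply in_Dx_scal. apply Hz.
  - apply (in_Dx_ext (fun z => Cplus (sum_n (fun k => tm x z k) N) (Cmult (ip x (e (S N))) (zeta (S N) z)))).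
    + intros z. rewrite sumC_S. reflexivity.
    + apply in_Dx_add. exact Hsn. exact IHN. apply in_Dx_scal. apply Hz.
Qed.

Lemma W_in_Dx x
  (Hpl : forall u w, Dp u -> Dp w -> Dp (plus u w))
  (Hsc : forall (a : C) u, Dp u -> Dp (scal a u))
  (HJ : forall B, strong_bounded V Dp I p B -> exists (F : list I) (c : R),
      forall Phi x, B Phi -> Dp x -> Cmod (Phi x) <= c * sum_sn V I p F x) :
  in_Dx V Dp I p (Wf x).
Proof.
  split; [|split].
  - intros u w Hu Hw. apply W_val.
    apply (is_series_ext (fun k => plus (tm x u k) (tm x w k))).
    + intros k. change (Cplus (tm x u k) (tm x w k) = tm x (plus u w) k). unfold tm.
      rewrite (proj1 (Hz k)) by assumption. ring.
    + apply (is_series_plus (K := C_AbsRing) (V := C_NormedModule)); apply W_series; assumption.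
  - intros a u Hu. apply W_val.
    apply (is_series_ext (fun k => scal (Cconj a) (tm x u k))).
    + intros k. change (Cmult (Cconj a) (tm x u k) = tm x (scal a u) k). unfold tm.
      rewrite (proj1 (proj2 (Hz k))) by assumption. ring.
    + apply (is_series_scal (K := C_AbsRing) (V := C_NormedModule)). apply W_series; assumption.
  - destruct (HJ (fun Phi => exists N, Phi = (fun z => sum_n (fun k => tm x z k) N))) as (F & c & HFc).
    + split.
      * intros Phi [N ->]. apply partial_in_Dx.
      * intros M HM. destruct (Hb M HM) as [bM HbM].
        exists ((Re (ip x x) / 1 + 1 * Rabs bM) / 2).
        intros Phi z [N ->] Mz.
        eapply Rle_trans. apply Cmod_sum.
        assert (HbN : forall N, sum_n (fun k => Cmod (zeta k z) ^ 2) N <= Rabs bM).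
        { intros N'. eapply Rle_trans. apply (HbM z N' Mz). apply Rle_abs. }
        pose proof (tm_abs_bound x z (Rabs bM) 1 N Rlt_0_1 HbN). lra.
    + exists F, c. intros z Dz.
      apply (lim_bound (tm x z)). apply W_series; exact Dz.
      intros N. apply (HFc (fun z => sum_n (fun k => tm x z k) N)). exists N; reflexivity. exact Dz.
Qed.

End Fwd.

Lemma W_sum (V : ModuleSpace C_Ring) (Dp : V -> Prop) (W : V -> V -> C)
  (HWp : forall x y z, Dp z -> W (plus x y) z = Cplus (W x z) (W y z)) (u : nat -> V) z N :
  Dp z -> W (sum_n u N) z = sum_n (fun k => W (u k) z) N.
Proof.
  intros Dz. induction N. - rewrite !sum_O. reflexivity.
  - rewrite sum_Sn, sumC_S, HWp, IHN by exact Dz. reflexivity.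
Qed.

Lemma backward (V : ModuleSpace C_Ring) (ip : V -> V -> C) (Dp : V -> Prop) (I : Type) (p : I -> V -> R)
  (HIP : is_inner_product V ip) (e : nat -> V)
  (Horth : forall m n, ip (e m) (e n) = if Nat.eqb m n then RtoC 1 else RtoC 0)
  (zeta : nat -> V -> C) (W : V -> V -> C) :
  in_C_H_Dx V ip Dp I p W -> (forall n x, Dp x -> W (e n) x = zeta n x) ->
  bessel_like V Dp I p zeta.
Proof.
  intros (HW1 & HWp & HWs & HWb) HWe M HM.
  destruct (HWb M HM) as [c Hc].
  exists (c ^ 2). intros z N Mz.
  assert (Dz : Dp z) by (apply (proj1 HM); exact Mz).
  set (a := fun k => zeta k z).
  set (y := comb V e (fun k => Cconj (a k)) N).
  set (S := sum_n (fun k => Cmod (a k) ^ 2) N).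
  assert (HS0 : 0 <= S) by (apply sum_nonneg; intros; apply pow2_ge_0).
  assert (E1 : W y z = RtoC S).
  { unfold y, comb. rewrite (W_sum V Dp W HWp) by exact Dz. unfold S. rewrite <- sum_RtoC.
    apply sum_n_ext. intros k. rewrite HWs, HWe by exact Dz. fold (a k).
    rewrite Cmult_comm. apply Cmod2. }
  assert (E2 : hnorm V ip y = sqrt S).
  { unfold hnorm, y. rewrite (ip_comb_comb V ip HIP e Horth). simpl. unfold S. f_equal.
    apply sum_n_ext. intros k. rewrite Cmod_conj. reflexivity. }
  pose proof (Hc y z Mz) as H. rewrite E1, E2, Cmod_R, Rabs_pos_eq in H by exact HS0.
  change (S <= c ^ 2).
  assert (Hr : sqrt S * sqrt S = S) by (apply sqrt_sqrt; exact HS0).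
  assert (Hr0 : 0 <= sqrt S) by apply sqrt_pos.
  destruct (Req_dec (sqrt S) 0) as [H0 | H0].
  - rewrite H0 in Hr. nra.
  - assert (sqrt S <= c).
    { apply Rmult_le_reg_r with (sqrt S). lra. nra. }
    nra.
Qed.

Theorem proposition2p13 (V : ModuleSpace C_Ring) (ip : V -> V -> C)
  (Dp : V -> Prop) (I : Type) (p : I -> V -> R) :
  is_rigged V ip Dp I p ->
  t_complete V Dp I p ->
  reflexive V Dp I p ->
  (exists e : nat -> V, is_ONB V ip e) ->
  forall zeta : nat -> V -> C,
    (forall n, in_Dx V Dp I p (zeta n)) ->
    (bessel_like V Dp I p zeta <->
     forall e : nat -> V, is_ONB V ip e ->
       exists W : V -> V -> C, in_C_H_Dx V ip Dp I p W /\
         forall n x, Dp x -> W (e n) x = zeta n x).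
Proof.
  intros ((HIP & _) & (_ & Hpl & Hsc & _) & Hsn & _) _ (_ & _ & HJ & _) [e0 He0] zeta Hz.
  split.
  - intros Hb e [Horth _].
    exists (Wf V ip e zeta). split.
    + split; [|split; [|split]].
      * intros x. eapply W_in_Dx; eassumption.
      * intros x y z Dz. eapply W_plus; eassumption.
      * intros a x z Dz. eapply W_scal; eassumption.
      * intros M HM. eapply W_bound; eassumption.
    + intros n x _. apply W_e. exact Horth.
  - intros H. destruct (H e0 He0) as (W & HW & HWe).
    eapply backward; try eassumption. apply (proj1 He0).
Qed.
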